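(* Let $f_{N_2G}(x)=\left(\frac{\sqrt x+1}{2}\right)\sqrt{\frac{x+1}{2}}-\sqrt x$ for $x\in(0,\infty)$, let $f_{N_2G}^*(u)=u\,f_{N_2G}\!\left(\frac{1-u}{u}\right)$ for $u\in(0,1)$, extended by continuity to $[0,1]$ (explicitly $f_{N_2G}^*(u)=\frac{\sqrt2}{4}\left(\sqrt u+\sqrt{1-u}\right)-\sqrt{u(1-u)}$), and define $\overline M_{N_2G}(C_1,C_2)=E_X\{f_{N_2G}^*(P(C_2\mid x))\}$. Then $$P_e\le \frac12\left[1-\frac{4}{\sqrt2}\,\overline M_{N_2G}(C_1,C_2)\right].$$
   Context: Two-class decision problem: classes $C_1,C_2$, an observation $x$ in a space $\mathrm X$ with density $p(x)$, and a posteriori probabilities $P(C_1\mid x),P(C_2\mid x)\ge0$ with $P(C_1\mid x)+P(C_2\mid x)=1$. $E_X\{g(x)\}=\int_{\mathrm X} g(x)p(x)\,dx$. $P_e=E_X\{\min(P(C_1\mid x),P(C_2\mid x))\}$ is the Bayesian probability of error. *)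

(* Defs.v *)
From HB Require Import structures.
From mathcomp Require Import all_boot all_order all_algebra.
From mathcomp Require Import all_classical all_reals all_analysis.
Set Implicit Arguments. Unset Strict Implicit. Unset Printing Implicit Defensive.
Import Order.TTheory GRing.Theory Num.Theory.
Local Open Scope ring_scope.

Definition fN2G {R : realType} (x : R) : R :=
  ((Num.sqrt x + 1) / 2) * Num.sqrt ((x + 1) / 2) - Num.sqrt x.

(* f*(u) = u f((1-u)/u) on (0,1), extended by continuity to [0,1];
   the continuous extension at u = 0 and u = 1 equals sqrt 2 / 4
   (from the explicit formula (sqrt2/4)(sqrt u + sqrt(1-u)) - sqrt(u(1-u))). *)
Definition fN2G_star {R : realType} (u : R) : R :=
  if (0 < u) && (u < 1) then u * fN2G ((1 - u) / u) else Num.sqrt 2 / 4.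

(* E_X{g} = \int_X g(x) p(x) dx, with mu the reference measure on X *)
Definition EX {d : measure_display} {T : measurableType d} {R : realType}
  (mu : {measure set T -> \bar R}) (p : T -> R) (g : T -> R) : \bar R :=
  (\int[mu]_(x in [set: T]) (g x * p x)%:E)%E.

Definition Pe {d : measure_display} {T : measurableType d} {R : realType}
  (mu : {measure set T -> \bar R}) (p P1 P2 : T -> R) : \bar R :=
  EX mu p (fun x => Num.min (P1 x) (P2 x)).

Definition MbarN2G {d : measure_display} {T : measurableType d} {R : realType}
  (mu : {measure set T -> \bar R}) (p P2 : T -> R) : \bar R :=
  EX mu p (fun x => fN2G_star (P2 x)).

(* Main.v *)
Require Import Defs.
From HB Require Import structures.
From mathcomp Require Import all_boot all_order all_algebra.
From mathcomp Require Import all_classical all_reals all_analysis.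
Import Order.TTheory GRing.Theory Num.Theory.
Local Open Scope ring_scope.
From mathcomp Require Import ring lra measurable_realfun realfun.

Section R.
Variable R : realType.

Definition hN (u : R) : R :=
  Num.sqrt 2 / 4 * (Num.sqrt u + Num.sqrt (1 - u)) - Num.sqrt (u * (1 - u)).

Lemma key_ab (a b s : R) : 0 <= a -> a <= b -> a^+2 + b^+2 = 1 -> 0 < s -> s^+2 = 2 ->
  a^+2 <= 1/2 - s * (s/4 * (a + b) - a * b).
Proof.
move=> a0 ab h1 s0 s2.
have b0 : 0 <= b by lra.
have b1 : b <= 1 by nra.
have sg : a + b <= s by nra.
have t1 : b - a <= 1 by nra.
have H : 0 <= (1 - (b - a)) * (s * (1 + (b - a)) - (a + b)).
  apply: mulr_ge0; first lra. nra.
nra.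
Qed.

Lemma fstar_eq (u : R) : 0 <= u <= 1 -> fN2G_star u = hN u.
Proof.
move=> /andP[u0 u1].
rewrite /fN2G_star /hN.
have s0 : 0 < Num.sqrt (2:R) by rewrite sqrtr_gt0; lra.
have s2 : Num.sqrt (2:R) ^+ 2 = 2 by rewrite sqr_sqrtr //; lra.
case: ifP => [/andP[ug ul]|/negbT].
  set a : R := Num.sqrt u. set b : R := Num.sqrt (1 - u). set s : R := Num.sqrt (2:R).
  have a0 : 0 < a by rewrite sqrtr_gt0.
  have ea : u = a ^+ 2 by rewrite sqr_sqrtr //; lra.
  have eb : 1 - u = b ^+ 2 by rewrite sqr_sqrtr //; lra.
  have b0 : 0 <= b by rewrite sqrtr_ge0.
  have -> : Num.sqrt (u * (1 - u)) = a * b by rewrite sqrtrM.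
  rewrite /fN2G.
  have -> : Num.sqrt ((1 - u) / u) = b / a.
    rewrite eb ea -expr_div_n sqrtr_sqr ger0_norm //; exact: divr_ge0 b0 (ltW a0).
  have -> : Num.sqrt (((1 - u) / u + 1) / 2) = 1 / (s * a).
    rewrite (_ : ((1 - u) / u + 1) / 2 = (1 / (s * a)) ^+ 2).
      rewrite sqrtr_sqr ger0_norm //; apply: divr_ge0; [lra|]. by apply: mulr_ge0; apply: ltW.
    rewrite expr_div_n exprMn s2 -ea. field. lra.
  have e4 : s / 4 = 1 / (2 * s).
    rewrite (_ : 1 / (2 * s) = s / (2 * s ^+ 2)); first by rewrite s2; field.
    field; rewrite gt_eqF //.
  rewrite ea e4. field. rewrite !gt_eqF //.
move=> h.
have [->|un0] := eqVneq u 0.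
  by rewrite subr0 mul0r sqrtr0 sqrtr1 add0r mulr1 subr0.
have [->|un1] := eqVneq u 1.
  by rewrite subrr mulr0 sqrtr0 sqrtr1 addr0 mulr1 subr0.
exfalso; move/negP: h; apply; apply/andP; split.
  by rewrite lt_def un0 u0.
by rewrite lt_def eq_sym un1 u1.
Qed.

Lemma pointwise (u : R) : 0 <= u <= 1 ->
  Num.min (1 - u) u + (4 / Num.sqrt 2) / 2 * hN u <= 1 / 2.
Proof.
move=> /andP[u0 u1].
have s0 : 0 < Num.sqrt (2:R) by rewrite sqrtr_gt0; lra.
have s2 : Num.sqrt (2:R) ^+ 2 = 2 by rewrite sqr_sqrtr //; lra.
have -> : (4 / Num.sqrt 2) / 2 = Num.sqrt (2:R).
  move: s0 s2; set s : R := Num.sqrt 2 => s0 s2.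
  have -> : (4:R) = s ^+ 2 * 2 by rewrite s2; lra.
  field; rewrite gt_eqF //.
rewrite /hN.
have ea : u = Num.sqrt u ^+ 2 by rewrite sqr_sqrtr //.
have eb : 1 - u = Num.sqrt (1 - u) ^+ 2 by rewrite sqr_sqrtr //; lra.
rewrite sqrtrM //.
move: (sqrtr_ge0 u) (sqrtr_ge0 (1 - u)) ea eb.
set a : R := Num.sqrt u; set b : R := Num.sqrt (1 - u); set s : R := Num.sqrt (2:R).
move=> a0 b0 ea eb.
have h1 : a ^+ 2 + b ^+ 2 = 1 by rewrite -ea -eb; ring.
have [ab|ba] := lerP a b.
  have := key_ab a b s a0 ab h1 s0 s2.
  have : Num.min (1 - u) u <= u by rewrite ge_min lexx orbT.
  rewrite -ea. lra.
have := key_ab b a s b0 (ltW ba) (etrans (addrC _ _) h1) s0 s2.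
have : Num.min (1 - u) u <= 1 - u by rewrite ge_min lexx.
rewrite -eb. move=> H1 H2.
rewrite (addrC a b) (mulrC a b). lra.
Qed.

Lemma hN_bound (u : R) : 0 <= u <= 1 -> `|hN u| <= 1.
Proof.
move=> /andP[u0 u1].
have s0 : 0 < Num.sqrt (2:R) by rewrite sqrtr_gt0; lra.
have s2 : Num.sqrt (2:R) ^+ 2 = 2 by rewrite sqr_sqrtr //; lra.
have ea : u = Num.sqrt u ^+ 2 by rewrite sqr_sqrtr //.
have eb : 1 - u = Num.sqrt (1 - u) ^+ 2 by rewrite sqr_sqrtr //; lra.
rewrite /hN sqrtrM //.
move: s0 s2 (sqrtr_ge0 u) (sqrtr_ge0 (1 - u)) ea eb.
set a : R := Num.sqrt u; set b : R := Num.sqrt (1 - u); set s : R := Num.sqrt (2:R).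
move=> s0 s2 a0 b0 ea eb.
have a2 : a ^+ 2 <= 1 by rewrite -ea.
have b2 : b ^+ 2 <= 1 by rewrite -eb; lra.
have a1 : a <= 1 by nra.
have b1 : b <= 1 by nra.
have sl : s <= 2 by have := sqr_ge0 (s - 1); nra.
have p1 : 0 <= a * b by apply: mulr_ge0.
have p2 : a * b <= 1 by nra.
have p3 : 0 <= s * (a + b) by apply: mulr_ge0; lra.
have p4 : s * (a + b) <= 4 by nra.
rewrite ler_norml. apply/andP; split; lra.
Qed.
End R.
Arguments hN {R}.
Arguments fstar_eq {R u}.
Arguments pointwise {R u}.
Arguments hN_bound {R u}.

Theorem mainTheorem11 (d : measure_display) (T : measurableType d) (R : realType)
  (mu : {measure set T -> \bar R}) (p P1 P2 : T -> R)
  (p_meas : measurable_fun [set: T] p)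
  (p_ge0 : forall x, 0 <= p x)
  (p_int1 : (\int[mu]_(x in [set: T]) (p x)%:E = 1)%E)
  (P1_meas : measurable_fun [set: T] P1)
  (P2_meas : measurable_fun [set: T] P2)
  (P1_ge0 : forall x, 0 <= P1 x)
  (P2_ge0 : forall x, 0 <= P2 x)
  (P_sum1 : forall x, P1 x + P2 x = 1) :
  (Pe mu p P1 P2 <=
   (1 / 2)%:E * (1%:E - (4 / Num.sqrt 2)%:E * MbarN2G mu p P2))%E.
Proof.
have P2b x : 0 <= P2 x <= 1 by have := P_sum1 x; have := P1_ge0 x; have := P2_ge0 x; move=> *; apply/andP; split; lra.
have P1e x : P1 x = 1 - P2 x by have := P_sum1 x; lra.
have msq : measurable_fun setT (@Num.sqrt R) by apply: continuous_measurable_fun; exact: sqrt_continuous.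
have m1P2 : measurable_fun setT (fun x => 1 - P2 x) by apply: measurable_funB.
have mk : measurable_fun setT (fun x => hN (P2 x)).
  rewrite /hN; apply: measurable_funB.
    apply: measurable_funM => //; apply: measurable_funD.
      exact: measurableT_comp msq P2_meas.
    exact: measurableT_comp msq m1P2.
  apply: measurableT_comp msq _; exact: measurable_funM.
have mm : measurable_fun setT (fun x => Num.min (P1 x) (P2 x)) by exact: measurable_minr.
have ip : mu.-integrable setT (fun x => (p x)%:E).
  apply/integrableP; split; first exact: (@measurable_EFinP _ _ _ _ p).2.
  under eq_integral do rewrite gee0_abs ?lee_fin //.
  by rewrite p_int1 ltry.
have ik : mu.-integrable setT (fun x => (hN (P2 x) * p x)%:E).
  apply: le_integrable ip => //.
    by apply: (@measurable_EFinP _ _ _ _ (fun x => _ * p x)).2; apply: measurable_funM.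
  move=> x _. rewrite !abse_EFin lee_fin normrM (ger0_norm (p_ge0 x)).
  by apply: ler_piMl => //; exact: hN_bound.
have im : mu.-integrable setT (fun x => (Num.min (P1 x) (P2 x) * p x)%:E).
  apply: le_integrable ip => //.
    by apply: (@measurable_EFinP _ _ _ _ (fun x => _ * p x)).2; apply: measurable_funM.
  move=> x _; rewrite !abse_EFin lee_fin normrM (ger0_norm (p_ge0 x)).
  apply: ler_piMl => //; rewrite ler_norml; apply/andP; split.
    by rewrite le_min; apply/andP; split; [have := P1_ge0 x|have := P2_ge0 x]; lra.
  by rewrite ge_min; have := P2b x; move=> /andP[? ?]; rewrite orbC; apply/orP; left; lra.
rewrite /Pe /MbarN2G /EX.
rewrite [X in (_ * (_ - _ * X))%E](eq_integral (fun x => (hN (P2 x) * p x)%:E)); last first.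
  by move=> x _; rewrite fstar_eq // P2b.
set c : R := 4 / Num.sqrt 2.
have H : (\int[mu]_(x in setT) ((fun x => (Num.min (P1 x) (P2 x) * p x)%:E) \+
           (fun x => (c / 2)%:E * (hN (P2 x) * p x)%:E)) x
          <= \int[mu]_(x in setT) ((1/2)%:E * (p x)%:E))%E.
  apply: le_integral => //.
  - apply: integrableD => //; exact: integrableZl.
  - exact: integrableZl.
  move=> x _ /=; rewrite -!EFinM -EFinD lee_fin.
  have := pointwise (P2b x); rewrite -P1e -/c => hp.
  have := p_ge0 x; move=> p0.
  have -> : Num.min (P1 x) (P2 x) * p x + c / 2 * (hN (P2 x) * p x)
           = (Num.min (P1 x) (P2 x) + c / 2 * hN (P2 x)) * p x by ring.
  by rewrite ler_wpM2r.
move: H; rewrite integralD //; last exact: integrableZl.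
rewrite integralZl // integralZl // p_int1 mule1.
have f1 := integrable_fin_num measurableT im.
have f2 := integrable_fin_num measurableT ik.
rewrite -(fineK f1) -(fineK f2).
move: (fine _) (fine _) => e a.
rewrite -!EFinM -EFinD lee_fin => h.
rewrite -?EFinM -?EFinB -?EFinM lee_fin.
lra.
Qed.
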